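(* The statement $\tilde S(1)$ holds.
   Context: Parallelograms in $\mathbb{R}$ are compact intervals $\{b+x:|x|\le l\}$, $l>0$, with width $l$; $CR$ is the dilation of $R$ by factor $C$ about its centre. A finite family $\mathcal R$ is $B$-overlapping ($B:[1,\infty)\to[1,\infty)$ increasing) if $\sum_{R\in\mathcal R}1_{\mu R}\le B(\mu)$ for all $\mu\ge1$; a family depending on $\delta$ is boundedly overlapping if this holds with $B$ independent of $\delta$. Decoupling: for $S\subseteq\mathbb{R}^m$, a finite family $\mathcal R$ of parallelograms and $p,q\in[2,\infty]$, $\mathrm{Dec}(S,\mathcal R,p,q)$ is the smallest constant with $\|\sum_R f_R\|_{L^p(\mathbb{R}^m)}\le \mathrm{Dec}\,(\#\mathcal R)^{\frac12-\frac1q}\big\|\|f_R\|_{L^p}\big\|_{\ell^q(R\in\mathcal R)}$ for all smooth $f_R$ Fourier supported in $R\cap S$. $S$ can be $\ell^q(L^p)$ decoupled into $\mathcal R$ at cost $K$ if $S\subseteq\bigcup\mathcal R$ and $\mathrm{Dec}\le K$. $\mathcal P_{n,d}$: real polynomials in $n$ variables of degree at most $d$ with $\max_{[-1,1]^n}|\phi|\le1$. $\tilde S(n)$ means: for every $d\ge1$ there is $c_{n,d}>0$ such that for every $\phi\in\mathcal P_{n,d}$, every $0<\delta<c_{n,d}$, every $\varepsilon\in(0,1]$ and every parallelogram $R\subseteq[-1,1]^n$ of width at least $\delta$, there is a covering $\mathcal S_\delta$ of $\{x\in R:|\phi(x)|\le\delta\}$ by parallelograms contained in $2R$ such that (1)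 each member has width at least $\delta$ and $\mathcal S_\delta$ is boundedly overlapping; (2) $|\phi(x)|\le C\delta$ for every $x$ in every member; (3) for every $2\le p\le\frac{2(n+1)}{n-1}$ (for $n=1$: every $p\in[2,\infty]$), $\{x\in R:|\phi(x)|\le\delta\}$ can be $\ell^p(L^p)$ decoupled into $\mathcal S_\delta$ at cost at most $C\delta^{-\varepsilon}$. Here $C$ and the overlap function depend only on $n,d,\varepsilon,p$. *)

(* Defs.v *)
From HB Require Import structures.
From mathcomp Require Import all_boot all_order all_algebra.
From mathcomp Require Import all_classical all_reals all_analysis.
Set Implicit Arguments. Unset Strict Implicit. Unset Printing Implicit Defensive.
Import Order.TTheory GRing.Theory Num.Theory.
Import numFieldNormedType.Exports.
Local Open Scope classical_set_scope.
Local Open Scope ring_scope.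

Section Defs.
Variable R : realType.

(* A parallelogram in R^1 is encoded by P = (b, l) with l > 0 (centre b,
   width l); it is the interval {b + x : |x| <= l}.
   [par_set P mu] is the dilate mu P = {b + x : |x| <= mu * l}. *)
Definition is_par (P : R * R) : Prop := 0 < P.2.
Definition par_set (P : R * R) (mu : R) : set R :=
  [set x | `|x - P.1| <= mu * P.2].

Definition overlap_le (fam : seq (R * R)) (B : R -> R) : Prop :=
  forall mu : R, 1 <= mu -> forall x : R,
    \sum_(P <- fam) (\1_(par_set P mu) x : R) <= B mu.

Definition overlap_fun (B : R -> R) : Prop :=
  (forall mu, 1 <= mu -> 1 <= B mu) /\
  (forall mu1 mu2, 1 <= mu1 -> mu1 <= mu2 -> B mu1 <= B mu2).

Definition schwartz (f : R -> R) : Prop :=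
  forall k : nat,
    (forall x : R, derivable (derive1n k f) x 1) /\
    (forall a : nat, exists M : R, forall x : R,
        `|x ^+ a * derive1n k f x| <= M).

(* A complex-valued function is a pair (u, v) : real and imaginary parts.
   Fourier transform  \hat f(xi) = \int f(x) e^{-2 pi i x xi} dx. *)
Definition fourier_re (u v : R -> R) (xi : R) : R :=
  Rintegral lebesgue_measure setT
    (fun x => u x * cos (2 * pi * x * xi) + v x * sin (2 * pi * x * xi)).
Definition fourier_im (u v : R -> R) (xi : R) : R :=
  Rintegral lebesgue_measure setT
    (fun x => v x * cos (2 * pi * x * xi) - u x * sin (2 * pi * x * xi)).

Definition fourier_supported_in (u v : R -> R) (K : set R) : Prop :=
  forall xi, ~ K xi -> fourier_re u v xi = 0 /\ fourier_im u v xi = 0.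

Definition cmod (u v : R -> R) (x : R) : R := Num.sqrt (u x ^+ 2 + v x ^+ 2).

Definition LpC (p : \bar R) (u v : R -> R) : \bar R :=
  Lnorm lebesgue_measure p (fun x => (cmod u v x)%:E).

Definition einv (q : \bar R) : R :=
  match q with EFin r => r^-1 | _ => 0 end.

Definition ellq (q : \bar R) (n : nat) (a : nat -> \bar R) : \bar R :=
  match q with
  | EFin r => ((\sum_(i < n) (a i) `^ r) `^ r^-1)%E
  | _ => (\big[maxe/0%E]_(i < n) a i)%E
  end.

(* "Dec(S, fam, p, q) <= K": the l^q(L^p) decoupling inequality holds with
   constant K, for all (complex) Schwartz f_P Fourier supported in P /\ S. *)
Definition dec_le (S : set R) (fam : seq (R * R)) (p q : \bar R) (K : R)
  : Prop :=
  forall u v : nat -> R -> R,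
    (forall i, (i < size fam)%N ->
       schwartz (u i) /\ schwartz (v i) /\
       fourier_supported_in (u i) (v i) (par_set (nth (0, 0) fam i) 1 `&` S)) ->
    (LpC p (fun x => (\sum_(i < size fam) u i x)%R)
           (fun x => (\sum_(i < size fam) v i x)%R)
     <= (K * (size fam)%:R `^ (2^-1 - einv q))%R%:E *
        ellq q (size fam) (fun i => LpC p (u i) (v i)))%E.

Definition poly_class (d : nat) (phi : {poly R}) : Prop :=
  (size phi <= d.+1)%N /\ (forall x : R, -1 <= x <= 1 -> `|phi.[x]| <= 1).

Definition sublevel (phi : {poly R}) (Rr : R * R) (delta : R) : set R :=
  [set x | par_set Rr 1 x /\ `|phi.[x]| <= delta].

Definition par_cover (S : set R) (fam : seq (R * R)) : Prop :=
  forall x, S x -> exists2 P, P \in fam & par_set P 1 x.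

End Defs.

(* Main.v *)
Require Import Defs.
From HB Require Import structures.
From mathcomp Require Import all_boot all_order all_algebra.
From mathcomp Require Import all_classical all_reals all_analysis.
From mathcomp Require Import qpoly measurable_realfun ess_sup_inf.
From mathcomp Require Import ring lra zify.
Import Order.TTheory GRing.Theory Num.Theory.
Import numFieldNormedType.Exports.
Local Open Scope classical_set_scope.
Local Open Scope ring_scope.
Section PartA.
Context {R : realType}.

Lemma pow_lip (x y : R) n : `|x| <= 1 -> `|y| <= 1 ->
  `|x ^+ n - y ^+ n| <= n%:R * `|x - y|.
Proof.
move=> hx hy; elim: n => [|n IH]; first by rewrite !expr0 subrr normr0 mul0r.
have -> : x ^+ n.+1 - y ^+ n.+1 = x * (x ^+ n - y ^+ n) + (x - y) * y ^+ n.
  by rewrite !exprS; ring.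
apply: (le_trans (ler_normD _ _)); rewrite !normrM.
have h1 : `|x| * `|x ^+ n - y ^+ n| <= n%:R * `|x - y|.
  apply: (le_trans _ IH); rewrite -[X in _ <= X]mul1r; apply: ler_wpM2r => //.
have h2 : `|x - y| * `|y ^+ n| <= `|x - y|.
  rewrite -[X in _ <= X]mulr1; apply: ler_wpM2l => //.
  by rewrite normrX exprn_ile1.
by rewrite -nat1r mulrDl mul1r addrC lerD.
Qed.

Definition plip (q : {poly R}) : R := \sum_(i < size q) `|q`_i| * i%:R.

Lemma plip_ge0 q : 0 <= plip q.
Proof. by apply: sumr_ge0 => i _; rewrite mulr_ge0. Qed.

Lemma poly_lip (q : {poly R}) x y : `|x| <= 1 -> `|y| <= 1 ->
  `|q.[x] - q.[y]| <= plip q * `|x - y|.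
Proof.
move=> hx hy; rewrite !horner_coef -sumrB /plip mulr_suml.
apply: (le_trans (ler_norm_sum _ _ _)); apply: ler_sum => i _.
rewrite -mulrBr normrM -mulrA; apply: ler_wpM2l => //.
exact: pow_lip.
Qed.

Definition node (d : nat) (k : nat) : R := k%:R * (2 / d%:R) - 1.

Lemma node_inj d : (0 < d)%N -> injective (node d).
Proof.
move=> d0 j k; rewrite /node => /eqP; rewrite subr_eq subrK.
have hd : 2 / d%:R != 0 :> R by rewrite mulf_neq0 // ?invr_eq0 pnatr_eq0 -?lt0n.
by rewrite (inj_eq (mulIf hd)) eqr_nat => /eqP.
Qed.

Lemma node_in d (k : nat) : (0 < d)%N -> (k <= d)%N -> `|node d k| <= 1.
Proof.
move=> d0 kd; rewrite /node ler_norml.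
have h0 : 0 <= k%:R * (2 / d%:R) :> R by rewrite mulr_ge0 // divr_ge0.
have h2 : k%:R * (2 / d%:R) <= 2 :> R.
  rewrite mulrA ler_pdivrMr ?ltr0n // mulrC ler_pM2l //.
  by rewrite ler_nat.
apply/andP; split; lra.
Qed.

Lemma class_lip d : (0 < d)%N -> exists L : R, 0 <= L /\
  forall phi : {poly R}, (size phi <= d.+1)%N ->
  (forall x : R, -1 <= x <= 1 -> `|phi.[x]| <= 1) ->
  forall x y : R, `|x| <= 1 -> `|y| <= 1 -> `|phi.[x] - phi.[y]| <= L * `|x - y|.
Proof.
move=> d0.
have n0 : (0 < d.+1)%N by [].
pose l := fun i : 'I_d.+1 => tnth (d.+1.-lagrange (node d)) i.
exists (\sum_(i < d.+1) plip (l i)); split.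
  by apply: sumr_ge0 => i _; exact: plip_ge0.
move=> phi sphi hphi x y hx hy.
rewrite (lagrange_gen n0 (@node_inj d d0) sphi) !horner_sum -sumrB mulr_suml.
apply: (le_trans (ler_norm_sum _ _ _)); apply: ler_sum => i _.
rewrite !hornerM !hornerC -mulrBr normrM.
rewrite /l /=; apply: (le_trans _ (poly_lip _ _ _ hx hy)).
rewrite -[X in _ <= X]mul1r; apply: ler_wpM2r => //.
apply: hphi; rewrite -ler_norml; apply: node_in => //.
by rewrite -ltnS.
Qed.


End PartA.
Section PartA1.
Context {R : realType}.

Lemma roots_list n (p : {poly R}) : (size p <= n)%N -> p != 0 ->
  exists s : seq R, (size s < size p)%N /\ forall x, root p x -> x \in s.
Proof.
elim: n p => [|n IH] p sp p0.
  by move: p0; rewrite -size_poly_eq0; move: sp; rewrite leqn0 => ->.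
have [[a ra]|nr] := pselect (exists a, root p a); last first.
  exists [::]; split; first by rewrite size_poly_gt0.
  by move=> x rx; exfalso; apply: nr; exists x.
move/factor_theorem: ra => [q pq].
have q0 : q != 0 by apply: contraNneq p0 => q0; rewrite pq q0 mul0r.
have Xa0 : 'X - a%:P != 0 :> {poly R} by rewrite polyXsubC_eq0.
have szp : size p = (size q).+1.
  by rewrite pq size_mul // size_XsubC addn2.
have sq : (size q <= n)%N by rewrite -ltnS -szp.
have [s [ss hs]] := IH q sq q0.
exists (a :: s); split; first by rewrite szp /= ltnS.
move=> x; rewrite pq rootM => /orP[/hs xs|]; first by rewrite in_cons xs orbT.
by rewrite root_XsubC => /eqP ->; rewrite in_cons eqxx.
Qed.

End PartA1.
Section PartC.
Context {R : realType}.

Lemma sqrt_tri (a b c e : R) :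
  Num.sqrt ((a + b) ^+ 2 + (c + e) ^+ 2) <=
  Num.sqrt (a ^+ 2 + c ^+ 2) + Num.sqrt (b ^+ 2 + e ^+ 2).
Proof.
set A := Num.sqrt (a ^+ 2 + c ^+ 2); set B := Num.sqrt (b ^+ 2 + e ^+ 2).
have A0 : 0 <= A by exact: sqrtr_ge0.
have B0 : 0 <= B by exact: sqrtr_ge0.
have hA : A ^+ 2 = a ^+ 2 + c ^+ 2 by rewrite sqr_sqrtr // addr_ge0 // sqr_ge0.
have hB : B ^+ 2 = b ^+ 2 + e ^+ 2 by rewrite sqr_sqrtr // addr_ge0 // sqr_ge0.
have hAB : a * b + c * e <= A * B.
  rewrite /A /B -sqrtrM ?addr_ge0 ?sqr_ge0 //.
  apply: (le_trans (ler_norm _)); rewrite -sqrtr_sqr ler_sqrt.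
    have := sqr_ge0 (a * e - c * b); nra.
  by rewrite mulr_ge0 // addr_ge0 // sqr_ge0.
rewrite -[X in _ <= X]ger0_norm ?addr_ge0 // -sqrtr_sqr ler_sqrt ?sqr_ge0 //.
nra.
Qed.

Lemma cmod_ge0 (u v : R -> R) x : 0 <= cmod u v x.
Proof. exact: sqrtr_ge0. Qed.

Lemma cmod_sum n (u v : nat -> R -> R) x :
  cmod (fun y => \sum_(i < n) u i y) (fun y => \sum_(i < n) v i y) x <=
  \sum_(i < n) cmod (u i) (v i) x.
Proof.
elim: n => [|n IH].
  by rewrite /cmod !big_ord0 expr0n /= addr0 sqrtr0.
rewrite /cmod !big_ord_recr /=.
apply: (le_trans (sqrt_tri _ _ _ _)); rewrite lerD2r; exact: IH.
Qed.

Lemma schwartz_cont (f : R -> R) : schwartz f -> continuous f.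
Proof.
move=> sf x; have [hd _] := sf 0%N.
by apply: differentiable_continuous; apply/derivable1_diffP; exact: hd.
Qed.

Lemma cmod_meas (u v : R -> R) : measurable_fun setT u -> measurable_fun setT v ->
  measurable_fun setT (cmod u v).
Proof.
move=> mu mv; rewrite /cmod.
change (measurable_fun setT (Num.sqrt \o (fun x => u x ^+ 2 + v x ^+ 2))).
apply: measurableT_comp.
  exact: continuous_measurable_fun (@sqrt_continuous R).
by apply: measurable_funD; apply: measurable_funX.
Qed.

Local Open Scope ereal_scope.

Lemma Lnorm_mono (p : \bar R) (f g : R -> R) :
  measurable_fun setT f -> measurable_fun setT g ->
  (forall x, 0 <= f x <= g x)%R -> 1 <= p ->
  Lnorm lebesgue_measure p (EFin \o f) <= Lnorm lebesgue_measure p (EFin \o g).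
Proof.
move=> mf mg hfg; case: p => [r| |] // p1; rewrite unlock /=.
- have r1 : (1 <= r)%R by rewrite -lee_fin.
  have r0 : (0 < r)%R by apply: (lt_le_trans ltr01).
  apply: gt0_ler_poweR; first by rewrite invr_ge0 ltW.
  + rewrite in_itv /= leey andbT; apply: integral_ge0 => x _; by rewrite lee_fin powR_ge0.
  + rewrite in_itv /= leey andbT; apply: integral_ge0 => x _; by rewrite lee_fin powR_ge0.
  apply: ge0_le_integral; first exact: measurableT.
  + by move=> x _; rewrite lee_fin powR_ge0.
  + apply/measurable_EFinP.
    have H : measurable_fun setT ((fun y : R => y `^ r) \o (fun x : R => `|f x|))%R.
      apply: measurableT_comp; first exact: measurable_powR.
      exact: measurableT_comp.
    exact: H.
  + apply/measurable_EFinP.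
    have H : measurable_fun setT ((fun y : R => y `^ r) \o (fun x : R => `|g x|))%R.
      apply: measurableT_comp; first exact: measurable_powR.
      exact: measurableT_comp.
    exact: H.
  move=> x _; rewrite lee_fin; apply: ge0_ler_powR; first exact: ltW.
  + by rewrite nnegrE.
  + by rewrite nnegrE.
  have /andP[f0 fg] := hfg x.
  by rewrite !ger0_norm // (le_trans f0 fg).
- case: ifPn => // _; apply: le_ess_sup; apply: nearW => x /=.
  have /andP[f0 fg] := hfg x.
  by rewrite lee_fin !ger0_norm // (le_trans f0 fg).
Qed.

Lemma Lnorm_sum (p : \bar R) (F : nat -> R -> R) n : 1 <= p ->
  (forall i, measurable_fun setT (F i)) ->
  Lnorm lebesgue_measure p (EFin \o (fun x => \sum_(i < n) F i x)%R) <=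
  \sum_(i < n) Lnorm lebesgue_measure p (EFin \o F i).
Proof.
move=> p1 mF; elim: n => [|n IH].
  rewrite big_ord0.
  have -> : EFin \o (fun x => \sum_(i < 0) F i x)%R = cst 0.
    by apply/funext => x /=; rewrite big_ord0.
  rewrite Lnorm0 //; apply/eqP => p0; move: p1; by rewrite p0 leNgt lte01.
have -> : (fun x => \sum_(i < n.+1) F i x)%R =
   ((fun x => \sum_(i < n) F i x) \+ F n)%R.
  by apply/funext => x /=; rewrite big_ord_recr.
rewrite big_ord_recr.
apply: (le_trans (eminkowski _ _ _ _)) => //.
- have H : measurable_fun setT (fun x : R => \sum_(i < n) F i x)%R.
    by apply: measurable_sum.
  exact: H.
- exact: mF.
- by apply: leeD.
Qed.

End PartC.
Section PartD.
Context {R : realType}.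
Local Open Scope ereal_scope.

Lemma Lnorm_sum' (p : \bar R) (F : nat -> R -> R) n : 1 <= p ->
  (forall i, (i < n)%N -> measurable_fun setT (F i)) ->
  Lnorm lebesgue_measure p (EFin \o (fun x => \sum_(i < n) F i x)%R) <=
  \sum_(i < n) Lnorm lebesgue_measure p (EFin \o F i).
Proof.
move=> p1 mF.
pose G i := if (i < n)%N then F i else (fun=> 0%R).
have mG i : measurable_fun setT (G i).
  rewrite /G; case: ifP => [/mF //|_]; exact: measurable_cst.
have := @Lnorm_sum R p G n p1 mG.
have eG : forall i : 'I_n, G i = F i by move=> i; rewrite /G ltn_ord.
have -> : (fun x => \sum_(i < n) G i x)%R = (fun x => \sum_(i < n) F i x)%R.
  by apply/funext => x; apply: eq_bigr => i _; rewrite eG.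
by under eq_bigr => i _ do rewrite eG.
Qed.

Lemma sum_le_mul n (a : nat -> \bar R) (M : \bar R) : 0 <= M ->
  (forall i, (i < n)%N -> a i <= M) ->
  \sum_(i < n) a i <= (n%:R)%:E * M.
Proof.
move=> M0; elim: n => [|n IH] h; first by rewrite big_ord0 mul0e.
rewrite big_ord_recr /= -natr1 EFinD ge0_muleDl ?lee_fin // mul1e.
apply: leeD; last exact: h.
by apply: IH => i lt; apply: h; rewrite ltnS ltnW.
Qed.

Lemma ellq_ge0 (p : \bar R) n (a : nat -> \bar R) : 0 <= ellq p n a.
Proof.
case: p => [r||] /=; first exact: poweR_ge0.
- elim: (index_enum 'I_n) => [|k s IH]; first by rewrite big_nil.
  by rewrite big_cons /= le_max IH orbT.
- elim: (index_enum 'I_n) => [|k s IH]; first by rewrite big_nil.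
  by rewrite big_cons /= le_max IH orbT.
Qed.

Lemma ellq_ge (p : \bar R) n (a : nat -> \bar R) j : 2%:E <= p ->
  (forall i, 0 <= a i) -> (j < n)%N -> a j <= ellq p n a.
Proof.
case: p => [r||] //= p2 a0 jn.
- rewrite lee_fin in p2.
  have r0 : (0 < r)%R by apply: lt_le_trans p2.
  have -> : a j = (a j `^ r) `^ r^-1.
    by rewrite -poweRrM mulfV ?gt_eqF // poweRe1.
  apply: gt0_ler_poweR; first by rewrite invr_ge0 ltW.
  + by rewrite in_itv /= leey andbT poweR_ge0.
  + by rewrite in_itv /= leey andbT; apply: sume_ge0 => i _; exact: poweR_ge0.
  rewrite (bigD1 (Ordinal jn)) //=.
  by apply: leeDl; apply: sume_ge0 => i _; exact: poweR_ge0.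
- have : Ordinal jn \in index_enum 'I_n by rewrite mem_index_enum.
  elim: (index_enum 'I_n) => [|k s IH] //.
  rewrite in_cons big_cons /= le_max => /orP[/eqP <-|/IH ->] //.
  by rewrite lexx.
  by rewrite orbT.
Qed.

End PartD.
Section PartE.
Context {R : realType}.

Lemma einv_le (p : \bar R) : (2%:E <= p)%E -> (0 <= 2^-1 - einv p)%R.
Proof.
case: p => [r||] //= p2.

rewrite lee_fin in p2; rewrite subr_ge0 lef_pV2 ?posrE //.
exact: lt_le_trans p2.
Qed.

Lemma N_le (N K e : R) : (0 <= e)%R -> (N = 0 \/ 1 <= N)%R -> (N <= K)%R ->
  (N <= K * N `^ e)%R.
Proof.
move=> e0 [->|N1] NK.
  by rewrite mulr_ge0 ?powR_ge0 // (le_trans _ NK).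
have h : (1 <= N `^ e)%R.
  by rewrite -(powRr0 N); apply: ler_powR.
have K0 : (0 <= K)%R by apply: le_trans NK; apply: le_trans N1.
by apply: (le_trans NK); rewrite -[X in (X <= _)%R]mulr1 ler_wpM2l.
Qed.

Local Open Scope ereal_scope.

Lemma dec_triv (S : set R) (fam : seq (R * R)) (p : \bar R) (K : R) :
  2%:E <= p -> ((size fam)%:R <= K)%R -> dec_le S fam p p K.
Proof.
move=> p2 NK u v H.
set N := size fam.
have p1 : 1 <= p by apply: le_trans p2; rewrite lee_fin ler1n.
have mu i : (i < N)%N -> measurable_fun setT (u i).
  move=> iN; have [su _] := H i iN.
  exact: continuous_measurable_fun (schwartz_cont _ su).
have mv i : (i < N)%N -> measurable_fun setT (v i).
  move=> iN; have [_ [sv _]] := H i iN.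
  exact: continuous_measurable_fun (schwartz_cont _ sv).
have mc i : (i < N)%N -> measurable_fun setT (cmod (u i) (v i)).
  by move=> iN; apply: cmod_meas; [exact: mu|exact: mv].
have mU : measurable_fun setT (fun x => \sum_(i < N) u i x)%R.
  by apply: measurable_sum => i; apply: mu.
have mV : measurable_fun setT (fun x => \sum_(i < N) v i x)%R.
  by apply: measurable_sum => i; apply: mv.
have mS : measurable_fun setT (fun x => \sum_(i < N) cmod (u i) (v i) x)%R.
  by apply: measurable_sum => i; apply: mc.
have h1 := @Lnorm_mono R p _ _ (cmod_meas _ _ mU mV) mS
  (fun x => introT andP (conj (cmod_ge0 _ _ x) (cmod_sum _ _ _ x))) p1.
have h2 := @Lnorm_sum' R p (fun i => cmod (u i) (v i)) N p1 mc.
have h3 := @sum_le_mul R N (fun i => LpC p (u i) (v i)) (ellq p N (fun i => LpC p (u i) (v i)))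
  (ellq_ge0 _ _ _) (fun i lt => ellq_ge _ _ _ _ p2 (fun i => Lnorm_ge0 _ _ _) lt).
apply: (le_trans h1); apply: (le_trans h2); apply: (le_trans h3).
apply: lee_pmul => //; first exact: ellq_ge0.
rewrite lee_fin; apply: N_le => //; first exact: einv_le.
by case: (N) => [|n]; [left|right; rewrite ler1n].
Qed.

End PartE.
Section PartB1.
Context {R : realType}.

Definition hw (dl e e' : R) : R := Num.max ((e' - e) / 2) dl.
Definition cen (b l dl e e' : R) : R :=
  let h := hw dl e e' in let c0 := (e + e') / 2 in
  if c0 < b - l + h then b - l + h else if b + l - h < c0 then b + l - h else c0.

Lemma hw_cases (dl e e' : R) :
  ((e' - e) / 2 <= dl /\ hw dl e e' = dl) \/ (dl < (e' - e) / 2 /\ hw dl e e' = (e' - e) / 2).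
Proof.
rewrite /hw; have [h|h] := leP ((e' - e) / 2) dl.
  by left; split => //; rewrite max_r.
by right; split => //; rewrite max_l // ltW.
Qed.

Lemma geom_cover (b l dl e e' x : R) : 0 < dl -> dl <= l ->
  b - l <= e -> e <= x -> x <= e' -> e' <= b + l ->
  `|x - cen b l dl e e'| <= hw dl e e'.
Proof.
move=> d0 dl1 h1 h2 h3 h4; rewrite /cen ler_norml.
case: (hw_cases dl e e') => [[hc ->]|[hc ->]].
  case: ifP => [/ltW ?|/negbT]; first by apply/andP; split; lra.
  rewrite -leNgt => ?.
  case: ifP => [/ltW ?|/negbT]; first by apply/andP; split; lra.
  by rewrite -leNgt => ?; apply/andP; split; lra.
case: ifP => [? |_]; first by exfalso; lra.
case: ifP => [? |_]; first by exfalso; lra.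
by apply/andP; split; lra.
Qed.

Lemma geom_inside (b l dl e e' y : R) : 0 < dl -> dl <= l ->
  b - l <= e -> e <= e' -> e' <= b + l ->
  `|y - cen b l dl e e'| <= hw dl e e' -> `|y - b| <= l.
Proof.
move=> d0 dl1 h1 h2 h4; rewrite /cen !ler_norml.
case: (hw_cases dl e e') => [[hc ->]|[hc ->]].
  case: ifP => [/ltW ?|/negbT]; first by move=> /andP[? ?]; apply/andP; split; lra.
  rewrite -leNgt => ?.
  case: ifP => [/ltW ?|/negbT]; first by move=> /andP[? ?]; apply/andP; split; lra.
  by rewrite -leNgt => ? /andP[? ?]; apply/andP; split; lra.
case: ifP => [? |_]; first by exfalso; lra.
case: ifP => [? |_]; first by exfalso; lra.
by move=> /andP[? ?]; apply/andP; split; lra.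
Qed.

Lemma geom_near (b l dl e e' y : R) : 0 < dl -> dl <= l ->
  b - l <= e -> e <= e' -> e' <= b + l ->
  `|y - cen b l dl e e'| <= hw dl e e' -> (e <= y <= e') \/ `|y - e| <= 2 * dl.
Proof.
move=> d0 dl1 h1 h2 h4; rewrite /cen ler_norml [`|y - e| <= _]ler_norml.
case: (hw_cases dl e e') => [[hc ->]|[hc ->]].
  case: ifP => [/ltW ?|/negbT]; first by move=> /andP[? ?]; right; apply/andP; split; lra.
  rewrite -leNgt => ?.
  case: ifP => [/ltW ?|/negbT]; first by move=> /andP[? ?]; right; apply/andP; split; lra.
  by rewrite -leNgt => ? /andP[? ?]; right; apply/andP; split; lra.
case: ifP => [? |_]; first by exfalso; lra.
case: ifP => [? |_]; first by exfalso; lra.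
by move=> /andP[? ?]; left; apply/andP; split; lra.
Qed.

Lemma seq_max (s : seq R) (x : R) : (exists2 y, y \in s & y <= x) ->
  exists e, [/\ e \in s, e <= x & forall y, y \in s -> y <= x -> y <= e].
Proof.
elim: s => [[y]//|a s IH] [y ys yx].
have [ax|xa] := leP a x.
  have [hs|hs] := pselect (exists2 y, y \in s & y <= x).
    have [e [es ex he]] := IH hs.
    have [ae|ea] := leP a e.
      exists e; split => //; first by rewrite in_cons es orbT.
      by move=> z; rewrite in_cons => /orP[/eqP ->|zs] // zx; apply: he.
    exists a; split => //; first by rewrite in_cons eqxx.
    move=> z; rewrite in_cons => /orP[/eqP ->|zs] // zx.
    by apply: le_trans (he z zs zx) (ltW ea).
  exists a; split => //; first by rewrite in_cons eqxx.
  move=> z; rewrite in_cons => /orP[/eqP ->|zs] // zx.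
  by exfalso; apply: hs; exists z.
have hs : exists2 y, y \in s & y <= x.
  exists y => //; move: ys; rewrite in_cons => /orP[/eqP yE|//].
  by move: yx; rewrite yE leNgt xa.
have [e [es ex he]] := IH hs.
exists e; split => //; first by rewrite in_cons es orbT.
move=> z; rewrite in_cons => /orP[/eqP ->|zs] zx; last exact: he.
by move: zx; rewrite leNgt xa.
Qed.

Lemma seq_min (s : seq R) (x : R) : (exists2 y, y \in s & x <= y) ->
  exists e, [/\ e \in s, x <= e & forall y, y \in s -> x <= y -> e <= y].
Proof.
move=> [y ys yx].
have [|e [es ex he]] := seq_max (map -%R s) (- x).
  by exists (- y); [rewrite map_f | rewrite lerN2].
move: es ex he => /mapP [e' e's ->] ex he.
exists e'; split => //; first by rewrite -lerN2.
move=> z zs xz; rewrite -lerN2; apply: he; first by rewrite map_f.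
by rewrite lerN2.
Qed.

Lemma ivt_between (f : R -> R) (x y s : R) : continuous f ->
  (f x <= s <= f y \/ f y <= s <= f x) ->
  exists z, Num.min x y <= z <= Num.max x y /\ f z = s.
Proof.
move=> cf hs.
wlog xy : x y hs / x <= y.
  move=> H; have /orP[xy|yx] := le_total x y; first exact: (H x y hs xy).
  have hs' : f y <= s <= f x \/ f x <= s <= f y by case: hs; [right|left].
  have [z [hz fz]] := H y x hs' yx.
  by exists z; rewrite minC maxC.
rewrite min_l // max_r //.
have [||z zi fz] := @IVT R f x y s xy.
- by move=> z; apply: continuous_subspaceT.
- case: hs => /andP[h1 h2].
    by rewrite ge_min h1 le_max h2 orbT.
  by rewrite ge_min h1 orbT le_max h2.
by exists z; split => //; move: zi; rewrite in_itv.
Qed.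

End PartB1.
Lemma sum_le_size {R : realType} (s : seq (R * R)) (F : R * R -> R) :
  (forall P, F P <= 1) -> \sum_(P <- s) F P <= (size s)%:R.
Proof.
move=> h; elim: s => [|a s IH]; first by rewrite big_nil.
by rewrite big_cons /= -add1n natrD lerD.
Qed.

Theorem proposition2p5 (R : realType) :
  forall d : nat, (1 <= d)%N ->
  exists c : R, 0 < c /\
  exists (B : R -> R -> R) (C : R -> R) (Cd : R -> \bar R -> R),
    (forall eps : R, 0 < eps <= 1 -> overlap_fun (B eps)) /\
    forall phi : {poly R}, poly_class d phi ->
    forall delta : R, 0 < delta < c ->
    forall eps : R, 0 < eps <= 1 ->
    forall Rr : R * R, is_par Rr ->
      par_set Rr 1 `<=` [set x | -1 <= x <= 1] -> delta <= Rr.2 ->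
    exists fam : seq (R * R),
      uniq fam /\ (forall P, P \in fam -> is_par P) /\
      par_cover (sublevel phi Rr delta) fam /\
      (forall P, P \in fam -> par_set P 1 `<=` par_set Rr 2) /\
      (forall P, P \in fam -> delta <= P.2) /\
      overlap_le fam (B eps) /\
      (forall P, P \in fam -> forall x, par_set P 1 x ->
          `|phi.[x]| <= C eps * delta) /\
      (forall p : \bar R, (2%:E <= p)%E ->
          dec_le (sublevel phi Rr delta) fam p p
                 (Cd eps p * delta `^ (- eps))).
Proof.
move=> d d1.
have [L [L0 hL]] := @class_lip R d d1.
pose Kd : R := ((2 * d + 2) ^ 2)%N%:R.
have Kd1 : 1 <= Kd by rewrite /Kd ler1n expn_gt0 addn2.
exists 1; split => //.
exists (fun _ _ => Kd), (fun _ => 1 + 2 * L), (fun _ _ => Kd).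
split; first by move=> eps _; split.
move=> phi [sphi hphi] dl /andP[dl0 dl1] eps /andP[eps0 eps1] [b l] /= l0 Rsub dll.
have hR : forall y, `|y - b| <= l -> `|y| <= 1.
  move=> y hy; rewrite ler_norml; apply: (Rsub y); rewrite /par_set /= mul1r //.
have [s1 [ss1 hs1]] : exists s1 : seq R, (size s1 <= d)%N /\
    (phi - dl%:P != 0 -> forall x, phi.[x] = dl -> x \in s1).
  case: (eqVneq (phi - dl%:P) 0) => [e0|nz].
    by exists [::]; split => //; rewrite e0 eqxx.
  have [s [ss hs]] := roots_list _ _ (leqnn (size (phi - dl%:P))) nz.
  exists s; split.
    rewrite -ltnS; apply: (leq_trans ss); apply: (leq_trans (size_add _ _)).
    by rewrite geq_max sphi size_opp (leq_trans (size_polyC_leq1 _)).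
  by move=> _ x hx; apply: hs; rewrite /root !hornerE hx subrr.
have [s2 [ss2 hs2]] : exists s2 : seq R, (size s2 <= d)%N /\
    (phi + dl%:P != 0 -> forall x, phi.[x] = - dl -> x \in s2).
  case: (eqVneq (phi + dl%:P) 0) => [e0|nz].
    by exists [::]; split => //; rewrite e0 eqxx.
  have [s [ss hs]] := roots_list _ _ (leqnn (size (phi + dl%:P))) nz.
  exists s; split.
    rewrite -ltnS; apply: (leq_trans ss); apply: (leq_trans (size_add _ _)).
    by rewrite geq_max sphi (leq_trans (size_polyC_leq1 _)).
  by move=> _ x hx; apply: hs; rewrite /root !hornerE hx addNr.
pose E := [:: b - l; b + l] ++ s1 ++ s2.
have szE : (size E <= 2 * d + 2)%N.
  by rewrite /E !size_cat /=; lia.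
pose T := sublevel phi (b, l) dl.
have TE : forall y, T y <-> `|y - b| <= l /\ `|phi.[y]| <= dl.
  by move=> y; rewrite /T /sublevel /par_set /= mul1r.
pose good (ee : R * R) : Prop := ee.1 <= ee.2 /\ forall y, ee.1 <= y <= ee.2 -> T y.
pose mk (ee : R * R) := (cen b l dl ee.1 ee.2, hw dl ee.1 ee.2).
pose fam0 := [seq mk ee | ee <- allpairs pair E E & `[< good ee >]].
pose fam := undup fam0.
have memfam : forall P, P \in fam -> exists ee, good ee /\ P = mk ee.
  move=> P; rewrite mem_undup => /mapP [ee]; rewrite mem_filter => /andP[/asboolP gee _] ->.
  by exists ee.
have goodR : forall ee, good ee -> b - l <= ee.1 /\ ee.2 <= b + l.
  move=> [e e'] [/= ee' hg].
  have /TE [h1 _] := hg e (introT andP (conj (lexx e) ee')).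
  have /TE [h2 _] := hg e' (introT andP (conj ee' (lexx e'))).
  move: h1 h2; rewrite !ler_norml => /andP[? ?] /andP[? ?]; split; lra.
have hwge : forall ee, dl <= hw dl ee.1 ee.2.
  by move=> ee; rewrite /hw le_max lexx orbT.
have szf : (size fam <= (2 * d + 2) ^ 2)%N.
  apply: (leq_trans (size_undup _)); rewrite size_map.
  rewrite size_filter; apply: (leq_trans (count_size _ _)); rewrite size_allpairs.
  by rewrite expnS expn1 leq_mul.
have szfR : (size fam)%:R <= Kd by rewrite ler_nat.
exists fam; split; first exact: undup_uniq.
split.
  move=> P /memfam [ee [_ ->]]; rewrite /is_par /=.
  exact: lt_le_trans (hwge ee).
split.
  move=> x Tx.
  suff [ee [eeE [ge hx]]] : exists ee, ee \in allpairs pair E E /\ good ee /\ ee.1 <= x <= ee.2.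
    exists (mk ee).
      by rewrite mem_undup; apply: map_f; rewrite mem_filter eeE andbT; apply/asboolP.
    have [hb1 hb2] := goodR _ ge.
    case: ee eeE ge hx hb1 hb2 => e e' _ [/= ge1 _] /andP[/= h1 h2] hb1 hb2.
    rewrite /par_set /= mul1r.
    exact: geom_cover _ _ _ _ _ _ dl0 dll hb1 h1 h2 hb2.
  have /TE [xb px] := Tx.
  rewrite /is_par /= in l0.
  have inE1 : b - l \in E by rewrite /E inE eqxx.
  have inE2 : b + l \in E by rewrite /E !inE eqxx orbT.
  move: (xb); rewrite ler_norml => /andP[xb1 xb2].
  have [c1|nz] := boolP ((phi - dl%:P == 0) || (phi + dl%:P == 0)).
    exists (b - l, b + l); split; first by apply: allpairs_f.
    have hall : forall y, `|phi.[y]| <= dl.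
      move=> y; case/orP: c1 => /eqP h.
        have -> : phi = dl%:P by apply/eqP; rewrite -subr_eq0 h.
        by rewrite hornerC ger0_norm // ltW.
      have -> : phi = - dl%:P by apply/eqP; rewrite -addr_eq0 h.
      by rewrite hornerN hornerC normrN ger0_norm // ltW.
    split => /=.
      split => /=; first lra.
      move=> y /andP[y1 y2]; apply/TE; split; last exact: hall.
      rewrite ler_norml; apply/andP; split; lra.
    apply/andP; split; lra.
  move: nz; rewrite negb_or => /andP[nz1 nz2].
  have hbl : b - l <= x by lra.
  have hxb : x <= b + l by lra.
  have [e [eE ex emax]] := seq_max E x (ex_intro2 _ _ (b - l) inE1 hbl).
  have [e' [eE' xe' emin]] := seq_min E x (ex_intro2 _ _ (b + l) inE2 hxb).
  have be : b - l <= e := emax _ inE1 hbl.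
  have eb : e' <= b + l := emin _ inE2 hxb.
  exists (e, e'); split; first by apply: allpairs_f.
  split; last by rewrite /= ex xe'.
  split => /=; first exact: le_trans ex xe'.
  move=> y /andP[ey ye']; apply/TE.
  have yb : `|y - b| <= l by rewrite ler_norml; apply/andP; split; lra.
  split => //.
  rewrite leNgt; apply/negP => hy.
  have key : forall z, z \in E -> Num.min x y <= z <= Num.max x y -> z != y -> False.
    move=> z zE /andP[z1 z2]; rewrite neq_lt => /orP zy.
    have /orP[xy|yx] := le_total x y.
      move: z1 z2; rewrite min_l // max_r // => z1 z2.
      have := emin z zE z1; case: zy => ?; lra.
    move: z1 z2; rewrite min_r // max_l // => z1 z2.
    have := emax z zE z2; case: zy => ?; lra.
  have cx : continuous (horner phi) by exact: continuous_horner.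
  move: px; rewrite ler_norml => /andP[px1 px2].
  move: hy; rewrite ltr_normr => /orP[hy|hy].
    have hs : phi.[x] <= dl <= phi.[y] \/ phi.[y] <= dl <= phi.[x].
      by left; apply/andP; split => //; apply: ltW.
    have [z [hz fz]] := ivt_between (horner phi) x y dl cx hs.
    apply: (key z) => //; first by rewrite !mem_cat (hs1 nz1 z fz) !orbT.
    by apply/eqP => zy; move: hy; rewrite -zy fz ltxx.
  have hs : phi.[x] <= - dl <= phi.[y] \/ phi.[y] <= - dl <= phi.[x].
    by right; apply/andP; split => //; rewrite lerNr ltW.
  have [z [hz fz]] := ivt_between (horner phi) x y (- dl) cx hs.
  apply: (key z) => //; first by rewrite !mem_cat (hs2 nz2 z fz) !orbT.
  by apply/eqP => zy; move: hy; rewrite -zy fz opprK ltxx.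
split.
  move=> P /memfam [[e e'] [ge ->]] y; rewrite /par_set /= !mul1r => hy.
  have [hb1 hb2] := goodR _ ge.
  case: ge => /= ge1 ge2.
  have := geom_inside _ _ _ _ _ _ dl0 dll hb1 ge1 hb2 hy.
  by move=> h; apply: (le_trans h); rewrite ler_peMl // ?ler1n // ltW.
split; first by move=> P /memfam [ee [_ ->]]; exact: hwge.
split.
  move=> mu _ x; apply: le_trans szfR; apply: sum_le_size => P.
  by rewrite /indic; case: (_ \in _).
split.
  move=> P /memfam [[e e'] [ge ->]] y; rewrite /par_set /= !mul1r => hy.
  have [hb1 hb2] := goodR _ ge.
  case: ge => /= ge1 ge2.
  have yb := geom_inside _ _ _ _ _ _ dl0 dll hb1 ge1 hb2 hy.
  have [ey|ye] := geom_near _ _ _ _ _ _ dl0 dll hb1 ge1 hb2 hy.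
    have /TE [_ h] := ge2 y ey.
    apply: (le_trans h); have := ltW dl0; nra.
  have /TE [eb he] := ge2 e (introT andP (conj (lexx e) ge1)).
  have := hL phi sphi hphi y e (hR y yb) (hR e eb).
  move=> hd.
  have : `|phi.[y]| <= `|phi.[e]| + L * `|y - e|.
    by rewrite -lerBlDl; apply: (le_trans (lerB_dist _ _)).
  move=> h; apply: (le_trans h).
  have : L * `|y - e| <= L * (2 * dl) by apply: ler_wpM2l.
  nra.
move=> p p2; apply: dec_triv => //.
apply: (le_trans szfR).
have hp : 1 <= dl `^ (- eps).
  rewrite powRN invf_ge1 ?powR_gt0 //.
  rewrite -[X in _ <= X](powRr0 dl); apply: ger_powR => //.
  by rewrite dl0 ltW.
  by rewrite ltW.
by rewrite -[X in X <= _]mulr1 ler_wpM2l // (le_trans ler01 Kd1).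
Qed.
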